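(* Let $S$ be a quaternionic structure with abstract 2-Brauer group $B(S)$ and fundamental ideal $I=I(S)$ of its Witt ring. Then $B(S)\cong I^2/I^3$ as groups, via the isomorphism $I^2/I^3\to B(S)$ sending $\langle\langle a,b\rangle\rangle+I^3$ to $q(a,b)$.
   Context: A quaternionic structure is a triple $S=(G,-1,q)$ where $G$ is a multiplicative group in which every element is its own inverse, $-1\in G$ is distinguished (possibly $-1=1$), $-a:=(-1)a$, and $q:G\times G\to Q$ is surjective onto a set $Q$ with distinguished $0$, satisfying for all $a,b,c,d\in G$: (Q1) $q(a,-a)=0$; (Q2) $q(a,b)=q(b,a)$; (Q3) $q(a,b)=q(a,c)\iff q(a,bc)=0$; (Q4) $q(a,b)=q(c,d)\iff\exists x\in G$: $q(a,b)=q(a,x)=q(c,x)=q(c,d)$. The abstract 2-Brauer group $B(S)$ is the abelian group (operation $\ast$) generated by $Q$ subject only to $q(a,b)\ast q(a,c)=q(a,bc)$ for all $a,b,c\in G$. Forms: tuples $\langle a_1,\dots,a_n\rangle\in G^n$ with $\perp$ (concatenation) and $\otimes$ ($\varphi\otimes\langle b_1,\dots,b_m\rangle=b_1\varphi\perp\dots\perp b_m\varphi$, $c\varphi=\langle ca_1,\dots\rangle$). Isometry: $\langle a\rangle\cong\langle b\rangle$ iff $a=b$; $\langle a,b\rangle\cong\langle c,d\rangle$ iff $ab=cd$ and $q(a,b)=q(c,d)$; for $n>2$, $\langle a_1,\dots,a_n\rangle\cong\langle b_1,\dots,b_n\rangle$ iff there are $a,b\in G$ and $\chi$ of dimension $n-2$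 with $\langle a_1,a\rangle\cong\langle b_1,b\rangle$, $\langle a_2,\dots,a_n\rangle\cong\langle a\rangle\perp\chi$, $\langle b_2,\dots,b_n\rangle\cong\langle b\rangle\perp\chi$. $\mathbb H=\langle1,-1\rangle$. Witt equivalence: $\varphi\perp k\times\mathbb H\cong\psi\perp l\times\mathbb H$ for some $k,l$; the Witt ring $W(S)$ is the ring of Witt classes under $\perp,\otimes$. The fundamental ideal $I(S)$ is the ideal of classes of even-dimensional forms and $I^k$ its $k$-th power. $\langle\langle a,b\rangle\rangle=\langle1,-a\rangle\otimes\langle1,-b\rangle$. *)

(* Defs.v *)
From mathcomp Require Import ssreflect ssrfun ssrbool eqtype ssrnat seq.
Set Implicit Arguments. Unset Strict Implicit. Unset Printing Implicit Defensive.

Record qstruct := QStruct {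
  G : Type;
  mulG : G -> G -> G;
  oneG : G;
  mulgA : forall x y z, mulG x (mulG y z) = mulG (mulG x y) z;
  mul1g : forall x, mulG oneG x = x;
  mulg1 : forall x, mulG x oneG = x;
  mulgg : forall x, mulG x x = oneG;
  m1 : G;
  Q : Type;
  zeroQ : Q;
  q : G -> G -> Q;
  q_surj : forall x : Q, exists a b, q a b = x;
  Q1 : forall a, q a (mulG m1 a) = zeroQ;
  Q2 : forall a b, q a b = q b a;
  Q3 : forall a b c, q a b = q a c <-> q a (mulG b c) = zeroQ;
  Q4 : forall a b c d, q a b = q c d <->
         exists x, q a b = q a x /\ q a x = q c x /\ q c x = q c d
}.

Section Forms.
Variable T : qstruct.
Local Notation G := (G T).
Local Notation mul := (@mulG T).
Local Notation one := (@oneG T).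
Local Notation q := (@q T).

(* forms are finite tuples of elements of G; perp is concatenation (++) *)
Definition form := seq G.

Definition scale (c : G) (phi : form) : form := map (mul c) phi.

Definition tensor (phi psi : form) : form := flatten [seq scale b phi | b <- psi].

Definition iso2 (a1 a2 b1 b2 : G) : Prop :=
  mul a1 a2 = mul b1 b2 /\ q a1 a2 = q b1 b2.

Fixpoint isom (n : nat) (phi psi : form) : Prop :=
  match n with
  | 0 => phi = [::] /\ psi = [::]
  | S n' =>
    match n' with
    | 0 => exists a b, phi = [:: a] /\ psi = [:: b] /\ a = b
    | 1 => exists a1 a2 b1 b2,
             phi = [:: a1; a2] /\ psi = [:: b1; b2] /\ iso2 a1 a2 b1 b2
    | _ => exists a1 phi' b1 psi' (a b : G) (chi : form),
             phi = a1 :: phi' /\ psi = b1 :: psi' /\ size chi = n.-2 /\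
             iso2 a1 a b1 b /\ isom n' phi' (a :: chi) /\ isom n' psi' (b :: chi)
    end
  end.

Definition iso (phi psi : form) : Prop := isom (size phi) phi psi.

Definition hyp : form := [:: one; m1 T].
Definition hyps (k : nat) : form := flatten (nseq k hyp).

Definition witt (phi psi : form) : Prop :=
  exists k l, iso (phi ++ hyps k) (psi ++ hyps l).

Definition pfister (a b : G) : form :=
  tensor [:: one; mul (@m1 T) a] [:: one; mul (@m1 T) b].

Definition prodf (chis : seq form) : form := foldl tensor [:: one] chis.

(* I^k : the k-th power of the fundamental ideal I (classes of even-dim.   *)
(* forms), i.e. the additive subgroup of W(T) generated by the products of *)
(* k elements of I; as a (Witt-class-closed) predicate on forms.           *)
Inductive Ipow (k : nat) : form -> Prop :=
| Ipow_prod (chis : seq form) (phi : form) :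
    size chis = k -> all (fun chi => ~~ odd (size chi)) chis ->
    witt phi (prodf chis) -> Ipow k phi
| Ipow_zero (phi : form) : witt phi [::] -> Ipow k phi
| Ipow_add (phi psi chi : form) :
    Ipow k phi -> Ipow k psi -> witt chi (phi ++ psi) -> Ipow k chi
| Ipow_opp (phi chi : form) :
    Ipow k phi -> witt (chi ++ phi) [::] -> Ipow k chi.

Definition cosetI3_eq (phi psi : form) : Prop :=
  exists chi, Ipow 3 chi /\ witt phi (psi ++ chi).

End Forms.

(* The abstract 2-Brauer group B(S): the abelian group presented by     *)
(* generators Q and relations q(a,b) * q(a,c) = q(a,bc).  Elements are  *)
(* words in the generators and their inverses ((true,x) = x,            *)
(* (false,x) = x^-1), product = concatenation, modulo the congruence    *)
(* generated by the group, commutativity and defining relations.        *)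
Definition Bword (S : qstruct) := seq (bool * Q S).

Inductive Beq (S : qstruct) : Bword S -> Bword S -> Prop :=
| Beq_refl u : Beq u u
| Beq_sym u v : Beq u v -> Beq v u
| Beq_trans u v w : Beq u v -> Beq v w -> Beq u w
| Beq_cat u u' v v' : Beq u u' -> Beq v v' -> Beq (u ++ v) (u' ++ v')
| Beq_invr x : Beq [:: (true, x); (false, x)] [::]
| Beq_invl x : Beq [:: (false, x); (true, x)] [::]
| Beq_comm g h : Beq [:: g; h] [:: h; g]
| Beq_rel a b c :
    Beq [:: (true, @q S a b); (true, @q S a c)] [:: (true, @q S a (@mulG S b c))].

(* Main.v *)
Require Import Defs.
From mathcomp Require Import ssreflect ssrfun ssrbool eqtype ssrnat seq div.
From Stdlib Require Import Permutation Setoid Morphisms ClassicalEpsilon.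
Set Implicit Arguments. Unset Strict Implicit. Unset Printing Implicit Defensive.

Section Main.
Variable S : qstruct.
Local Notation G := (G S).
Local Infix "⋅" := (@mulG S) (at level 40, left associativity).
Local Notation one := (@oneG S).
Local Notation m1 := (@m1 S).
Local Notation q := (@q S).
Local Notation Q := (Q S).
Local Notation zeroQ := (@zeroQ S).

Lemma mulgC (x y : G) : x ⋅ y = y ⋅ x.
Proof.
transitivity (x ⋅ y ⋅ ((y ⋅ x) ⋅ (y ⋅ x))); first by rewrite mulgg mulg1.
by rewrite !mulgA -(mulgA x y y) mulgg mulg1 mulgg mul1g.
Qed.

Inductive gexp := GV of nat | G1 | GM of gexp & gexp.
Fixpoint evalg (env : seq G) e : G :=
  match e with GV n => nth one env n | G1 => one | GM a b => (evalg env a ⋅ evalg env b) end.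
Fixpoint xorv (s t : seq bool) : seq bool :=
  match s, t with
  | [::], _ => t | _, [::] => s
  | a :: s', b :: t' => (xorb a b) :: xorv s' t' end.
Fixpoint nfg e : seq bool :=
  match e with GV n => rcons (nseq n false) true | G1 => [::] | GM a b => xorv (nfg a) (nfg b) end.
Fixpoint evalb (env : seq G) (s : seq bool) : G :=
  match s with [::] => one | b :: s' => ((if b then head one env else one) ⋅ evalb (behead env) s') end.
Fixpoint nfeq (s t : seq bool) : bool :=
  match s, t with
  | [::], _ => all negb t | _, [::] => all negb s
  | a :: s', b :: t' => (a == b) && nfeq s' t' end.

Lemma evalb_xor env s t : evalb env (xorv s t) = (evalb env s ⋅ evalb env t).
Proof.
elim: s t env => [|a s IH] [|b t] env /=; rewrite ?mul1g ?mulg1 //.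
rewrite IH; case: a; case: b => /=; rewrite ?mul1g ?mulg1.
- set h := head one env; set A := evalb _ s; set B := evalb _ t.
  by rewrite (mulgC h A) -mulgA (mulgA h h B) mulgg mul1g.
- by rewrite !mulgA.
- set h := head one env; set A := evalb _ s; set B := evalb _ t.
  by rewrite mulgA (mulgC h A) -mulgA.
- by [].
Qed.

Lemma evalb_allneg env s : all negb s -> evalb env s = one.
Proof. elim: s env => [|a s IH] env //= /andP[]; case: a => // _ /IH ->; exact: mulg1. Qed.

Lemma evalb_nf env s t : nfeq s t -> evalb env s = evalb env t.
Proof.
elim: s t env => [|a s IH] [|b t] env /=.
- by [].
- by move=> H; rewrite (evalb_allneg (behead env) (_ : all negb t)) ?mulg1;
     move: H => /andP[]; case: b => //= _ ->; rewrite mul1g.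
- move/andP=> [] ; case: a => //= _ H; by rewrite (evalb_allneg _ H) mul1g.
- by move=> /andP[/eqP -> /IH ->].
Qed.

Lemma evalb_var env n : evalb env (rcons (nseq n false) true) = nth one env n.
Proof.
elim: n env => [|n IH] env /=.
- by rewrite mulg1; case: env.
- by rewrite mul1g IH; case: env => [|? ?] //=; rewrite !nth_nil.
Qed.

Lemma evalg_nf env e : evalg env e = evalb env (nfg e).
Proof.
elim: e => [n||a IHa b IHb] /=; first by rewrite evalb_var.
- by [].
- by rewrite evalb_xor IHa IHb.
Qed.

Lemma gnorm_ok env e1 e2 : nfeq (nfg e1) (nfg e2) -> evalg env e1 = evalg env e2.
Proof. by rewrite !evalg_nf => /evalb_nf ->. Qed.



Ltac gfind x env := match env with
 | [::] => constr:(@None nat)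
 | x :: _ => constr:(Some 0)
 | _ :: ?e => let r := gfind x e in
     match r with Some ?n => constr:(Some (Datatypes.S n)) | None => constr:(@None nat) end
end.
Ltac app_end env x := match env with
 | [::] => constr:([:: x])
 | ?y :: ?e => let e' := app_end e x in constr:(y :: e') end.
Ltac glen env := match env with [::] => constr:(0) | _ :: ?e => let n := glen e in constr:(Datatypes.S n) end.
Ltac gquote e env :=
 match e with
 | @mulG _ ?a ?b => let r1 := gquote a env in
     match r1 with (?ea, ?env1) => let r2 := gquote b env1 in
        match r2 with (?eb, ?env2) => constr:((GM ea eb, env2)) end end
 | @oneG _ => constr:((G1, env))
 | _ => let r := gfind e env in
        match r with
        | Some ?n => constr:((GV n, env))
        | None => let n := glen env in let env' := app_end env e in constr:((GV n, env'))
        end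
 end.
Ltac gnorm := match goal with |- @eq ?T ?l ?r =>
  let r1 := gquote l (@nil T) in
  match r1 with (?el, ?env1) => let r2 := gquote r env1 in
    match r2 with (?er, ?env) =>
      change (evalg env el = evalg env er); apply: gnorm_ok; vm_compute; reflexivity
  end end end.

Lemma test (x y z : G) : x ⋅ (m1 ⋅ y) ⋅ (z ⋅ m1) ⋅ y = z ⋅ x.
Proof. gnorm. Qed.

Section PermLemmas.
Variable T : Type.
Implicit Types (a b : T) (l A X t : seq T).
Lemma Pmiddle a l1 l2 : Permutation (a :: l1 ++ l2) (l1 ++ a :: l2).
Proof. exact: Permutation_middle. Qed.
Lemma Papp_head l m n : Permutation m n -> Permutation (l ++ m) (l ++ n).
Proof. exact: Permutation_app_head. Qed.
Lemma Pmiddle_block A b t : Permutation (A ++ b :: t) (b :: A ++ t).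
Proof. symmetry; exact: Permutation_middle. Qed.
Lemma Pswap_blocks A X t : Permutation (A ++ X ++ t) (X ++ A ++ t).
Proof. rewrite !catA; apply: Permutation_app_tail; exact: Permutation_app_comm. Qed.
Lemma Pcat_comm A X : Permutation (A ++ X) (X ++ A).
Proof. exact: Permutation_app_comm. Qed.
Lemma Pcons_end a X : Permutation (a :: X) (X ++ [:: a]).
Proof. exact: Permutation_cons_append. Qed.
Lemma Pcats0 A : Permutation (A ++ [::]) A.
Proof. by rewrite cats0. Qed.
Lemma In_cat x l1 l2 : List.In x (l1 ++ l2) -> List.In x l1 \/ List.In x l2.
Proof. exact: List.in_app_or. Qed.
Lemma In_catl x l1 l2 : List.In x l1 -> List.In x (l1 ++ l2).
Proof. move=> H; apply: List.in_or_app; by left. Qed.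
Lemma In_catr x l1 l2 : List.In x l2 -> List.In x (l1 ++ l2).
Proof. move=> H; apply: List.in_or_app; by right. Qed.
Lemma Psize l l' : Permutation l l' -> size l = size l'.
Proof. by elim=> //= [x l1 l2 _ -> | l1 l2 l3 _ -> _ ->]. Qed.
Lemma Pcat_head l m n : Permutation m n -> Permutation (l ++ m) (l ++ n).
Proof. exact: Permutation_app_head. Qed.
Lemma Pcat_tail l m n : Permutation m n -> Permutation (m ++ l) (n ++ l).
Proof. exact: Permutation_app_tail. Qed.
End PermLemmas.
Arguments Pcat_head {T} l {m n}.
Arguments Pcat_tail {T} l {m n}.

Ltac rm_el a R := match R with
 | a :: ?t => t
 | ?b :: ?t => let t' := rm_el a t in constr:(b :: t')
 | ?X ++ ?t => let t' := rm_el a t in constr:(X ++ t')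
end.
Ltac rm_bl A R := match R with
 | A ++ ?t => t
 | A => let T0 := type of A in let T1 := eval hnf in T0 in lazymatch T1 with seq ?T => constr:(@nil T) | list ?T => constr:(@nil T) end
 | ?b :: ?t => let t' := rm_bl A t in constr:(b :: t')
 | ?X ++ ?t => let t' := rm_bl A t in constr:(X ++ t')
end.
Ltac pf := match goal with
 | |- Permutation (?a :: ?t) (?a :: ?t) => apply: Permutation_refl
 | |- Permutation (?a :: ?b :: ?t) (?b :: ?r) =>
      eapply perm_trans; [apply: perm_swap | apply: perm_skip; pf]
 | |- Permutation (?a :: ?X ++ ?t) (?X ++ ?r) =>
      eapply perm_trans; [apply: Pmiddle | apply: Papp_head; pf]
 | |- Permutation (?a :: ?X) (?X ++ ?r) =>
      eapply perm_trans; [apply: Pcons_end | apply: Papp_head; pf]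
 | |- Permutation [:: ?a] [:: ?a] => apply: Permutation_refl
 end.
Ltac pfb := match goal with
 | |- Permutation (?A ++ ?t) (?A ++ ?t) => apply: Permutation_refl
 | |- Permutation (?A ++ [::]) ?A => apply: Pcats0
 | |- Permutation (?A ++ ?b :: ?t) (?b :: ?r) =>
      eapply perm_trans; [apply: Pmiddle_block | apply: perm_skip; pfb]
 | |- Permutation (?A ++ ?X ++ ?t) (?X ++ ?r) =>
      eapply perm_trans; [apply: Pswap_blocks | apply: Papp_head; pfb]
 | |- Permutation (?A ++ ?X) (?X ++ ?r) =>
      eapply perm_trans; [apply: Pcat_comm | apply: Papp_head; pfb]
 | |- Permutation ?A ?A => apply: Permutation_refl
 end.
Ltac psolve0 :=
 lazymatch goal with
 | |- Permutation ?l ?l => apply: Permutation_refl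
 | |- Permutation [::] [::] => apply: perm_nil
 | |- Permutation (?a :: ?l) ?R => let R' := rm_el a R in
      apply: (@perm_trans _ _ (a :: R')); [apply: perm_skip; psolve0 | pf]
 | |- Permutation (?A ++ ?l) ?R => let R' := rm_bl A R in
      apply: (@perm_trans _ _ (A ++ R')); [apply: Papp_head; psolve0 | pfb]
 | |- Permutation ?A ?R => apply: (@perm_trans _ _ (A ++ [::])); [symmetry; apply: Pcats0| psolve0]
 end.
Ltac cat_norm := repeat match goal with
 | |- context [(?x ++ ?y) ++ ?z] => rewrite -[(x ++ y) ++ z]catA
 | |- context [?x ++ [::]] => rewrite [x ++ [::]]cats0
 | |- context [[::] ++ ?x] => rewrite [[::] ++ x]cat0s
 end.
Ltac psolve := cbn [cat fst snd]; cat_norm; cbn [cat fst snd]; psolve0.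

Lemma testp (x y z : G) (A B : seq G) : Permutation (x :: A ++ [:: y; z] ++ B) (B ++ z :: A ++ y :: [:: x]).
Proof. psolve. Qed.

Local Notation form := (Defs.form S).
Local Notation iso2 := (@iso2 S).
Local Notation isom := (@isom S).

Lemma iso2_refl x y : iso2 x y x y.
Proof. by []. Qed.
Lemma iso2_sym a b c d : iso2 a b c d -> iso2 c d a b.
Proof. by move=> [e1 e2]; split. Qed.
Lemma iso2_swl a b c d : iso2 a b c d -> iso2 b a c d.
Proof. by move=> [e1 e2]; split; [rewrite -e1; exact: mulgC | rewrite -e2; exact: Q2]. Qed.
Lemma iso2_swr a b c d : iso2 a b c d -> iso2 a b d c.
Proof. by move/iso2_sym/iso2_swl/iso2_sym. Qed.

Lemma isomE3 m L R : isom m.+3 L R <-> exists a1 L' b1 R' a b chi,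
  L = a1::L' /\ R = b1::R' /\ size chi = m.+1 /\ iso2 a1 a b1 b /\
  isom m.+2 L' (a::chi) /\ isom m.+2 R' (b::chi).
Proof. by []. Qed.

Lemma isom_size n : forall L R, isom n L R -> size L = n /\ size R = n.
Proof.
elim/ltn_ind: n => -[|[|[|m]]] IH L R /=.
- by case=> -> ->.
- by case=> [a [b [-> [-> _]]]].
- by case=> [a1 [a2 [b1 [b2 [-> [-> _]]]]]].
- case=> [a1 [L' [b1 [R' [a [b [chi [-> [-> [_ [_ [H1 H2]]]]]]]]]]]].
  case: (IH _ (ltnSn _) _ _ H1) => e1 _; case: (IH _ (ltnSn _) _ _ H2) => e2 _.
  by rewrite /= e1 e2.
Qed.

Definition blk (p : form * form) : Prop :=
  (exists x, p = ([:: x], [:: x])) \/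
  (exists x y z w, p = ([:: x; y], [:: z; w]) /\ iso2 x y z w).
Fixpoint allb (bs : seq (form * form)) : Prop :=
  match bs with [::] => True | p :: bs' => blk p /\ allb bs' end.
Definition Fl (bs : seq (form * form)) := flatten (map fst bs).
Definition Fr (bs : seq (form * form)) := flatten (map snd bs).
Definition flip (p : form * form) := (p.2, p.1).
Definition singles (l : form) := map (fun x => ([:: x], [:: x])) l.

Lemma allb_cat b1 b2 : allb (b1 ++ b2) <-> allb b1 /\ allb b2.
Proof. elim: b1 => [|p b1 IH] /=; [tauto | rewrite IH; tauto]. Qed.
Lemma allb_singles l : allb (singles l).
Proof. elim: l => //= x l IH; split => //; left; by exists x. Qed.
Lemma blk_flip p : blk p -> blk (flip p).
Proof.
case=> [[x ->]|[x [y [z [w [-> H]]]]]]; [left; by exists x|right].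
by exists z, w, x, y; split => //; apply: iso2_sym.
Qed.
Lemma allb_flip bs : allb bs -> allb (map flip bs).
Proof. elim: bs => //= p bs IH [/blk_flip ? /IH ?]; by split. Qed.
Lemma Fl_cat b1 b2 : Fl (b1 ++ b2) = Fl b1 ++ Fl b2.
Proof. by rewrite /Fl map_cat flatten_cat. Qed.
Lemma Fr_cat b1 b2 : Fr (b1 ++ b2) = Fr b1 ++ Fr b2.
Proof. by rewrite /Fr map_cat flatten_cat. Qed.
Lemma Fl_cons p bs : Fl (p :: bs) = p.1 ++ Fl bs. Proof. by []. Qed.
Lemma Fr_cons p bs : Fr (p :: bs) = p.2 ++ Fr bs. Proof. by []. Qed.
Lemma Fl_flip bs : Fl (map flip bs) = Fr bs.
Proof. by rewrite /Fl /Fr -map_comp. Qed.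
Lemma Fr_flip bs : Fr (map flip bs) = Fl bs.
Proof. by rewrite /Fl /Fr -map_comp; congr flatten; apply: eq_map => -[]. Qed.
Lemma Fl_singles l : Fl (singles l) = l.
Proof. by elim: l => //= x l; rewrite Fl_cons => /= ->. Qed.
Lemma Fr_singles l : Fr (singles l) = l.
Proof. by elim: l => //= x l; rewrite Fr_cons => /= ->. Qed.
Lemma size_blocks bs : allb bs -> size (Fl bs) = size (Fr bs).
Proof.
elim: bs => //= p bs IH [Hp /IH]; rewrite Fl_cons Fr_cons !size_cat => ->.
by case: Hp => [[x ->]|[x [y [z [w [-> _]]]]]].
Qed.

Lemma find_block x bs : List.In x (Fl bs) ->
  exists bs1 p bs2, bs = bs1 ++ p :: bs2 /\ List.In x p.1.
Proof.
elim: bs => [|p bs IH] //; rewrite Fl_cons => /(@In_cat _ x p.1 (Fl bs)) [H|H].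
- by exists [::], p, bs.
- case: (IH H) => [b1 [p' [b2 [E H']]]]; rewrite E.
  by exists (p :: b1), p', b2.
Qed.
Lemma find_block_r x bs : List.In x (Fr bs) ->
  exists bs1 p bs2, bs = bs1 ++ p :: bs2 /\ List.In x p.2.
Proof.
rewrite -Fl_flip => /find_block [b1 [p [b2 [E H]]]].
exists (map flip b1), (flip p), (map flip b2); split => //.
have Hf : forall l, map flip (map flip l) = l by elim=> //= -[? ?] ? ->.
by rewrite -(Hf bs) E map_cat.
Qed.

Lemma blocks0 bs : allb bs -> size (Fl bs) = 0 -> Fl bs = [::] /\ Fr bs = [::].
Proof.
move=> H H0; move: (size_blocks H); rewrite H0 => /esym H1.
by split; apply/size0nil.
Qed.
Lemma blocks1 bs : allb bs -> size (Fl bs) = 1 -> exists u, Fl bs = [:: u] /\ Fr bs = [:: u].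
Proof.
elim: bs => // p bs IH /= [Hp Hb]; rewrite Fl_cons Fr_cons.
case: Hp => [[x ->]|[x [y [z [w [-> _]]]]]] /=; last by case.
move=> [] /(blocks0 Hb) [-> ->]; by exists x.
Qed.
Lemma blocks2 bs : allb bs -> size (Fl bs) = 2 ->
  (exists u v, Fl bs = [:: u; v] /\ Fr bs = [:: u; v]) \/
  (exists x y z w, Fl bs = [:: x; y] /\ Fr bs = [:: z; w] /\ iso2 x y z w).
Proof.
case: bs => // p bs /= [Hp Hb]; rewrite Fl_cons Fr_cons.
case: Hp => [[x ->]|[x [y [z [w [-> H]]]]]] /=.
- move=> [] /(blocks1 Hb) [u [-> ->]]; left; by exists x, u.
- move=> [] /(blocks0 Hb) [-> ->]; right; by exists x, y, z, w.
Qed.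

Lemma perm2 (a b c d : G) : Permutation [:: a; b] [:: c; d] -> (a = c /\ b = d) \/ (a = d /\ b = c).
Proof.
move=> H; case: (Permutation_length_2_inv H) => -[-> ->]; tauto.
Qed.

Lemma reorder bs1 p bs2 :
  Permutation (Fl (bs1 ++ p :: bs2)) (p.1 ++ Fl (bs1 ++ bs2)) /\
  Permutation (Fr (bs1 ++ p :: bs2)) (p.2 ++ Fr (bs1 ++ bs2)).
Proof. rewrite !Fl_cat !Fr_cat Fl_cons Fr_cons; split; apply: Pswap_blocks. Qed.

Lemma allb_reorder bs1 p bs2 : allb (bs1 ++ p :: bs2) -> blk p /\ allb (bs1 ++ bs2).
Proof. by rewrite !allb_cat /= => -[? [? ?]]. Qed.


Lemma PP2_step m (IH : forall L R bs, size L = m.+2 -> allb bs ->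
    Permutation L (Fl bs) -> Permutation R (Fr bs) -> isom m.+2 L R)
  x1 L' y1 R' a b chi bsL bsR :
  size L' = m.+2 -> iso2 x1 a y1 b -> allb bsL -> Permutation L' (Fl bsL) ->
  Permutation (a::chi) (Fr bsL) -> allb bsR -> Permutation R' (Fl bsR) ->
  Permutation (b::chi) (Fr bsR) -> isom m.+3 (x1::L') (y1::R').
Proof.
move=> HL H2 HbL P1 P2 HbR P3 P4.
have Hc : size (a :: chi) = m.+2.
  by rewrite (Psize P2) -(size_blocks HbL) -(Psize P1).
have HR : size R' = m.+2.
  by rewrite (Psize P3) (size_blocks HbR) -(Psize P4).
exists x1, L', y1, R', a, b, chi; do 2 split => //; split; first by case: Hc.
split => //; split; [exact: (IH _ _ bsL) | exact: (IH _ _ bsR)].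
Qed.

Lemma PP2 n : forall L R bs, size L = n -> allb bs ->
  Permutation L (Fl bs) -> Permutation R (Fr bs) -> isom n L R.
Proof.
elim/ltn_ind: n => n IH L R bs HsL Hb PL PR.
have HsR : size R = n by rewrite (Psize PR) -(size_blocks Hb) -(Psize PL).
case: n IH HsL HsR => [|[|[|m]]] IH HsL HsR.
- by rewrite /=; split; apply/size0nil.
- case: (blocks1 Hb); first by rewrite -(Psize PL).
  move=> u [E1 E2]; rewrite E1 in PL; rewrite E2 in PR.
  rewrite (Permutation_length_1_inv (Permutation_sym PL)) (Permutation_length_1_inv (Permutation_sym PR)).
  by exists u, u.
- case: L R HsL HsR PL PR => [|l1 [|l2 []]] // [|r1 [|r2 []]] // _ _ PL PR.
  exists l1, l2, r1, r2; do 2 split => //.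
  case: (blocks2 Hb); first by rewrite -(Psize PL).
  + move=> [u [v [E1 E2]]]; rewrite E1 in PL; rewrite E2 in PR.
    case/perm2: PL => -[-> ->]; case/perm2: PR => -[-> ->] //;
      by [apply: iso2_swl | apply: iso2_swr | apply/iso2_swl/iso2_swr].
  + move=> [x [y [z [w [E1 [E2 H]]]]]]; rewrite E1 in PL; rewrite E2 in PR.
    case/perm2: PL => -[-> ->]; case/perm2: PR => -[-> ->] //;
      by [apply: iso2_swl | apply: iso2_swr | apply/iso2_swl/iso2_swr].
- case: L R HsL HsR PL PR => [|x1 L'] // [|y1 R'] // [HsL] [HsR] PL PR.
  have IH' := IH m.+2 (ltnSn _).
  have [bs1 [p [bs2 [Ebs Hx]]]] := find_block (Permutation_in x1 PL (List.in_eq _ _)).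
  subst bs; have [Hp Hrest] := allb_reorder Hb; have [QL QR] := reorder bs1 p bs2.
  move: (bs1 ++ bs2) Hrest QL QR => rest Hrest QL QR.
  have PL' := perm_trans PL QL; have PR' := perm_trans PR QR; clear PL PR QL QR.
  have Hy : List.In y1 (p.2 ++ Fr rest) by apply: (Permutation_in y1 PR' (List.in_eq _ _)).
  case: Hp Hx PL' PR' Hy => [[x Ep]|[x [y [z [w [Ep Hi]]]]]]; rewrite Ep /=.
  +
    case=> // Ex; subst x => PL' PR' Hy.
    have PL1 := Permutation_cons_inv PL'.
    case: Hy => [Ey|Hy].
    * subst y1; have PR1 := Permutation_cons_inv PR'.
      have Hs : size (Fl rest) = m.+2 by rewrite -(Psize PL1).
      case E: (Fl rest) Hs PL1 => [|a chi] // _ PL1.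
      apply: (PP2_step IH' (a := a) (b := a) (chi := chi) (bsL := singles (a :: chi))
                (bsR := map flip rest)) => //.
      * exact: allb_singles.
      * by rewrite Fl_singles.
      * by rewrite Fr_singles.
      * exact: allb_flip.
      * by rewrite Fl_flip.
      * by rewrite Fr_flip E.
    * have [r1 [g [r2 [Er Hg]]]] := find_block_r Hy.
      subst rest; have [Hgb Hrest'] := allb_reorder Hrest; have [QL QR] := reorder r1 g r2.
      move: (r1 ++ r2) Hrest' QL QR => rest' Hrest' QL QR.
      have PL2 := perm_trans PL1 QL.
      have PR2 := perm_trans PR' (Pcat_head [:: x1] QR).
      case: Hgb Hg PL2 PR2 => [[y Eg]|[s' [t [z [w [Eg Hi]]]]]]; rewrite Eg /=.
      -- case=> // Ey; subst y => PL2 PR2.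
         have PR3 : Permutation R' (x1 :: Fr rest').
           apply: (@Permutation_cons_inv _ _ _ y1); apply: (perm_trans PR2); psolve.
         apply: (PP2_step IH' (a := y1) (b := x1) (chi := Fl rest')
           (bsL := singles (y1 :: Fl rest')) (bsR := ([:: x1], [:: x1]) :: map flip rest')) => //.
         ++ apply: iso2_swl; exact: iso2_refl.
         ++ exact: allb_singles.
         ++ by rewrite Fl_singles.
         ++ by rewrite Fr_singles.
         ++ split; [left; by exists x1 | exact: allb_flip].
         ++ by rewrite Fl_cons Fl_flip.
         ++ by rewrite Fr_cons Fr_flip.
      -- move=> Hyz PL2 PR2.
         have [v [Pv Hv]] : exists v, Permutation [:: z; w] [:: y1; v] /\ iso2 s' t y1 v.
           case: Hyz => [<-|[<-|[]]]; first by exists w.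
           exists z; split; [exact: perm_swap | exact: iso2_swr].
         have PR3 : Permutation R' (x1 :: v :: Fr rest').
           apply: (@Permutation_cons_inv _ _ _ y1); apply: (perm_trans PR2).
           have H := Pcat_head [:: x1] (Pcat_tail (Fr rest') Pv).
           apply: (perm_trans H). psolve.
         apply: (PP2_step IH' (a := y1) (b := x1) (chi := v :: Fl rest')
           (bsL := ([:: s'; t], [:: y1; v]) :: singles (Fl rest'))
           (bsR := ([:: x1], [:: x1]) :: ([:: v], [:: v]) :: map flip rest')) => //.
         ++ apply: iso2_swl; exact: iso2_refl.
         ++ split; [right; by exists s', t, y1, v | exact: allb_singles].
         ++ by rewrite Fl_cons Fl_singles.
         ++ by rewrite Fr_cons Fr_singles.
         ++ split; [left; by exists x1|split; [left; by exists v | exact: allb_flip]].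
         ++ by rewrite !Fl_cons Fl_flip.
         ++ by rewrite !Fr_cons Fr_flip.
  +
    move=> Hx PL' PR' Hy.
    have [u [Pu Hu]] : exists u, Permutation [:: x; y] [:: x1; u] /\ iso2 x1 u z w.
      case: Hx => [<-|[<-|[]]]; first by exists y.
      exists x; split; [exact: perm_swap | exact: iso2_swl].
    have PL1 : Permutation L' (u :: Fl rest).
      apply: (@Permutation_cons_inv _ _ _ x1); apply: (perm_trans PL').
      exact: (Pcat_tail _ Pu).
    case: Hy => [Ey|[Ey|Hy]] //.
    * subst z; have PR1 : Permutation R' (w :: Fr rest) by exact: Permutation_cons_inv PR'.
      apply: (PP2_step IH' (a := u) (b := w) (chi := Fl rest)
        (bsL := singles (u :: Fl rest)) (bsR := ([:: w], [:: w]) :: map flip rest)) => //.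
      -- exact: allb_singles.
      -- by rewrite Fl_singles.
      -- by rewrite Fr_singles.
      -- split; [left; by exists w | exact: allb_flip].
      -- by rewrite Fl_cons Fl_flip.
      -- by rewrite Fr_cons Fr_flip.
    * subst w; have PR1 : Permutation R' (z :: Fr rest).
        apply: (@Permutation_cons_inv _ _ _ y1); apply: (perm_trans PR'); exact: perm_swap.
      apply: (PP2_step IH' (a := u) (b := z) (chi := Fl rest)
        (bsL := singles (u :: Fl rest)) (bsR := ([:: z], [:: z]) :: map flip rest)) => //.
      -- exact: iso2_swr.
      -- exact: allb_singles.
      -- by rewrite Fl_singles.
      -- by rewrite Fr_singles.
      -- split; [left; by exists z | exact: allb_flip].
      -- by rewrite Fl_cons Fl_flip.
      -- by rewrite Fr_cons Fr_flip.
    * have [r1 [g [r2 [Er Hg]]]] := find_block_r Hy.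
      subst rest; have [Hgb Hrest'] := allb_reorder Hrest; have [QL QR] := reorder r1 g r2.
      move: (r1 ++ r2) Hrest' QL QR => rest' Hrest' QL QR.
      have PL2 := perm_trans PL1 (perm_skip u QL).
      have PR2 := perm_trans PR' (Pcat_head [:: z; w] QR).
      case: Hgb Hg PL2 PR2 => [[y' Eg]|[s' [t [z' [w' [Eg Hi']]]]]]; rewrite Eg /=.
      -- case=> // Ey; subst y' => PL2 PR2.
         have PR3 : Permutation R' (z :: w :: Fr rest').
           apply: (@Permutation_cons_inv _ _ _ y1); apply: (perm_trans PR2); psolve.
         apply: (PP2_step IH' (a := y1) (b := x1) (chi := u :: Fl rest')
           (bsL := singles (y1 :: u :: Fl rest'))
           (bsR := ([:: z; w], [:: x1; u]) :: map flip rest')) => //.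
         ++ apply: iso2_swl; exact: iso2_refl.
         ++ exact: allb_singles.
         ++ rewrite Fl_singles; apply: (perm_trans PL2); psolve.
         ++ by rewrite Fr_singles.
         ++ split; [right; exists z, w, x1, u; split => //; exact: iso2_sym | exact: allb_flip].
         ++ by rewrite Fl_cons Fl_flip.
         ++ by rewrite Fr_cons Fr_flip.
      -- move=> Hyz PL2 PR2.
         have [v [Pv Hv]] : exists v, Permutation [:: z'; w'] [:: y1; v] /\ iso2 s' t y1 v.
           case: Hyz => [<-|[<-|[]]]; first by exists w'.
           exists z'; split; [exact: perm_swap | exact: iso2_swr].
         have PR3 : Permutation R' (z :: w :: v :: Fr rest').
           apply: (@Permutation_cons_inv _ _ _ y1); apply: (perm_trans PR2).
           apply: (perm_trans (Pcat_head [:: z; w] (Pcat_tail _ Pv))).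
           psolve.
         apply: (PP2_step IH' (a := y1) (b := x1) (chi := v :: u :: Fl rest')
           (bsL := ([:: s'; t], [:: y1; v]) :: singles (u :: Fl rest'))
           (bsR := ([:: z; w], [:: x1; u]) :: ([:: v], [:: v]) :: map flip rest')) => //.
         ++ apply: iso2_swl; exact: iso2_refl.
         ++ split; [right; by exists s', t, y1, v | exact: allb_singles].
         ++ rewrite Fl_cons Fl_singles; apply: (perm_trans PL2); psolve.
         ++ by rewrite Fr_cons Fr_singles.
         ++ split; [right; exists z, w, x1, u; split => //; exact: iso2_sym|].
            split; [left; by exists v | exact: allb_flip].
         ++ by rewrite !Fl_cons Fl_flip.
         ++ rewrite !Fr_cons Fr_flip /=; psolve.
Qed.

Local Notation witt := (@witt S).
Local Notation iso := (@iso S).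
Local Notation hyps := (@hyps S).
Local Notation I3 := (@Ipow S 3).
Definition neg (X : form) : form := scale m1 X.

Lemma qa1 a : q a one = zeroQ.
Proof. by have := (Q3 a one one).1 erefl; rewrite mulg1. Qed.
Lemma q1a a : q one a = zeroQ.
Proof. by rewrite Q2 qa1. Qed.

Lemma witt_blocks X Y k l bs : allb bs -> Permutation (X ++ hyps k) (Fl bs) ->
  Permutation (Y ++ hyps l) (Fr bs) -> witt X Y.
Proof. move=> Hb P1 P2; exists k, l; exact: (PP2 (bs := bs)). Qed.

Lemma witt_perm X Y : Permutation X Y -> witt X Y.
Proof.
move=> P; apply: (witt_blocks (k := 0) (l := 0) (bs := singles X)).
- exact: allb_singles.
- by rewrite Fl_singles cats0.
- by rewrite Fr_singles cats0; apply: Permutation_sym.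
Qed.
Lemma witt_refl X : witt X X.
Proof. exact/witt_perm/Permutation_refl. Qed.

Definition hb (y : G) := ([:: one; m1], [:: m1 ⋅ y; y]).
Lemma blk_hb y : blk (hb y).
Proof.
right; exists one, m1, (m1 ⋅ y), y; split => //; split; first by gnorm.
by rewrite q1a Q2 Q1.
Qed.
Lemma allb_hb C : allb (map hb C).
Proof. by elim: C => //= y C IH; split => //; exact: blk_hb. Qed.
Lemma Fl_hb C : Fl (map hb C) = hyps (size C).
Proof. by elim: C => //= y C IH; rewrite Fl_cons IH. Qed.
Lemma Fr_hb C : Permutation (Fr (map hb C)) (neg C ++ C).
Proof.
elim: C => //= y C IH; rewrite Fr_cons /=.
apply: perm_skip; apply: perm_trans (perm_skip y IH) _; psolve.
Qed.

Lemma witt_cancel A' B' A C : Permutation A' A -> Permutation B' (A ++ neg C ++ C) -> witt A' B'.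
Proof.
move=> P1 P2; apply: (witt_blocks (k := size C) (l := 0) (bs := singles A ++ map hb C)).
- by apply/allb_cat; split; [exact: allb_singles | exact: allb_hb].
- by rewrite Fl_cat Fl_singles Fl_hb; apply: Pcat_tail.
- rewrite Fr_cat Fr_singles cats0; apply: (perm_trans P2); apply: Pcat_head.
  exact: Permutation_sym (Fr_hb C).
Qed.

Lemma I3_zero : I3 [::].
Proof. apply: Ipow_zero; exact: witt_refl. Qed.
Lemma I3_witt X Y : I3 Y -> witt X Y -> I3 X.
Proof. move=> HY W; apply: (Ipow_add HY I3_zero); by rewrite cats0. Qed.
Lemma I3_perm X Y : I3 Y -> Permutation X Y -> I3 X.
Proof. by move=> HY /witt_perm; apply: I3_witt. Qed.
Lemma I3_add X Y : I3 X -> I3 Y -> I3 (X ++ Y).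
Proof. move=> HX HY; apply: (Ipow_add HX HY); exact: witt_refl. Qed.
Lemma neg_cat X Y : neg (X ++ Y) = neg X ++ neg Y.
Proof. exact: map_cat. Qed.
Lemma negK X : neg (neg X) = X.
Proof. by elim: X => //= x X; rewrite /neg /= => ->; congr (_ :: _); gnorm. Qed.
Lemma size_neg X : size (neg X) = size X.
Proof. exact: size_map. Qed.
Lemma isom_sym n : forall L R, isom n L R -> isom n R L.
Proof.
elim/ltn_ind: n => -[|[|[|m]]] IH L R /=.
- by case=> -> ->.
- by case=> [a [b [-> [-> ->]]]]; exists b, b.
- case=> [a1 [a2 [b1 [b2 [-> [-> H]]]]]]; exists b1, b2, a1, a2.
  split; [by []|split; [by []|exact: iso2_sym]].
- case=> [a1 [L' [b1 [R' [a [b [chi [-> [-> [Hc [H2 [H3 H4]]]]]]]]]]]].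
  exists b1, R', a1, L', b, a, chi; split; first done; split; first done.
  split; first done; split; first exact: iso2_sym. by split.
Qed.
Lemma witt_sym X Y : witt X Y -> witt Y X.
Proof.
move=> [k [l H]]; exists l, k; rewrite /iso.
have [_ E] := isom_size H; rewrite E; exact: isom_sym.
Qed.
Lemma I3_neg X : I3 X -> I3 (neg X).
Proof.
move=> HX; apply: (Ipow_opp HX); apply: witt_sym.
apply: (witt_cancel (A := [::]) (C := X)) => //.
Qed.


Definition Rel X Y := I3 (X ++ neg Y).
Lemma Rel_refl X : Rel X X.
Proof.
apply: Ipow_zero; apply: witt_sym.
apply: (witt_cancel (A := [::]) (C := X)) => //=; psolve.
Qed.
Lemma Rel_sym X Y : Rel X Y -> Rel Y X.
Proof.
move=> /I3_neg H; apply: (I3_perm H); rewrite neg_cat negK; psolve.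
Qed.
Lemma Rel_trans X Y Z : Rel X Y -> Rel Y Z -> Rel X Z.
Proof.
move=> H1 H2; apply: (I3_witt (I3_add H1 H2)).
apply: (witt_cancel (A := X ++ neg Z) (C := Y)) => //; psolve.
Qed.
Lemma Rel_cat X Y X' Y' : Rel X Y -> Rel X' Y' -> Rel (X ++ X') (Y ++ Y').
Proof.
move=> H1 H2; apply: (I3_perm (I3_add H1 H2)); rewrite /Rel neg_cat; psolve.
Qed.
Lemma Rel_perm X Y : Permutation X Y -> Rel X Y.
Proof. move=> P; apply: (I3_perm (Rel_refl Y)); exact: Pcat_tail. Qed.
Lemma Rel_blocks X Y k l bs : allb bs -> Permutation (X ++ hyps k) (Fl bs) ->
  Permutation (Y ++ hyps l) (Fr bs) -> Rel X Y.
Proof.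
move=> Hb P1 P2; apply: (I3_witt (Rel_refl Y)).
apply: (witt_blocks (k := k) (l := l) (bs := bs ++ singles (neg Y))).
- by apply/allb_cat; split => //; exact: allb_singles.
- rewrite Fl_cat Fl_singles; apply: perm_trans (Pcat_tail _ P1); psolve.
- rewrite Fr_cat Fr_singles; apply: perm_trans (Pcat_tail _ P2); psolve.
Qed.
Lemma I3_Rel X : I3 X <-> Rel X [::].
Proof. by rewrite /Rel /= cats0. Qed.

Local Notation Bw := (Bword S).
Local Notation "u ≡ v" := (@Beq S u v) (at level 70).
#[local] Instance Beq_Equiv : Equivalence (@Beq S).
Proof. split; [exact: Beq_refl | exact: Beq_sym | exact: Beq_trans]. Qed.
#[local] Instance cat_Proper : Proper (@Beq S ==> @Beq S ==> @Beq S) cat.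
Proof. move=> u u' Hu v v' Hv; exact: Beq_cat. Qed.
#[local] Instance cons_Proper c : Proper (@Beq S ==> @Beq S) (cons c).
Proof. move=> u u' Hu; exact: (Beq_cat (Beq_refl [:: c]) Hu). Qed.

#[local] Hint Resolve Beq_refl : core.
Lemma Bcomm1 c (v : Bw) : c :: v ≡ v ++ [:: c].
Proof.
elim: v => //= d v IH.
rewrite -IH; exact: (Beq_cat (Beq_comm c d) (Beq_refl v)).
Qed.
Lemma Bcomm (u v : Bw) : u ++ v ≡ v ++ u.
Proof.
elim: u => [|c u IH] /=; first by rewrite cats0.
by rewrite IH (Bcomm1 c (v ++ u)) (Bcomm1 c u) catA.
Qed.
Lemma Bperm (u v : Bw) : Permutation u v -> u ≡ v.
Proof.
elim=> //= [x l l' _ -> | x y l | l l' l'' _ H1 _ H2].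
- by [].
- exact: (Beq_cat (Beq_comm y x) (Beq_refl l)).
- by rewrite H1.
Qed.

Definition qw s t : Bw := [:: (true, q s t)].
Lemma qwC a b : qw a b = qw b a.
Proof. by rewrite /qw Q2. Qed.

Lemma Bzero : [:: (true, zeroQ)] ≡ [::].
Proof.
have H := Beq_rel one one one; rewrite mulg1 qa1 in H.
transitivity ([:: (true, zeroQ)] ++ [:: (true, zeroQ); (false, zeroQ)]).
  by rewrite Beq_invr cats0.
rewrite -[_ ++ _]/([:: (true, zeroQ); (true, zeroQ)] ++ [:: (false, zeroQ)]).
rewrite H; exact: Beq_invr.
Qed.
Lemma qw_a1 a : qw a one ≡ [::].
Proof. by rewrite /qw qa1 Bzero. Qed.
Lemma qw_1a a : qw one a ≡ [::].
Proof. by rewrite qwC qw_a1. Qed.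
Lemma qw_neg a : qw a (m1 ⋅ a) ≡ [::].
Proof. by rewrite /qw Q1 Bzero. Qed.
Lemma qwMr a b c : qw a (b ⋅ c) ≡ qw a b ++ qw a c.
Proof. symmetry; exact: Beq_rel. Qed.
Lemma qwMl a b c : qw (a ⋅ b) c ≡ qw a c ++ qw b c.
Proof. by rewrite !(qwC _ c) qwMr. Qed.
Lemma Bsq_t x : [:: (true, x); (true, x)] ≡ [::].
Proof.
have [a [b <-]] := q_surj x.
rewrite -[[:: _; _]]/(qw a b ++ qw a b) -qwMr mulgg; exact: qw_a1.
Qed.
Lemma Bft x : [:: (false, x)] ≡ [:: (true, x)].
Proof.
transitivity ([:: (false, x)] ++ [:: (true, x); (true, x)]); first by rewrite Bsq_t cats0.
rewrite -[_ ++ _]/([:: (false, x); (true, x)] ++ [:: (true, x)]).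
by rewrite Beq_invl.
Qed.
Lemma Bsq c : [:: c; c] ≡ [::].
Proof.
case: c => -[] x; first exact: Bsq_t.
rewrite -[[:: _; _]]/([:: (false, x)] ++ [:: (false, x)]) Bft; exact: Bsq_t.
Qed.
Lemma Bww (w : Bw) : w ++ w ≡ [::].
Proof.
elim: w => //= c w IH.
rewrite (Bperm (_ : Permutation (c :: w ++ c :: w) ([:: c; c] ++ w ++ w))); last by psolve.
by rewrite Bsq IH.
Qed.
Lemma Bcancel (u v : Bw) : u ++ v ≡ [::] -> u ≡ v.
Proof.
move=> H; transitivity (u ++ (v ++ v)); first by rewrite Bww cats0.
by rewrite catA H.
Qed.
Lemma Bcancel2 (u v : Bw) : u ≡ v -> u ++ v ≡ [::].
Proof. by move=> ->; rewrite Bww. Qed.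

Definition dform (X : form) : G := foldr (@mulG S) one X.
Definition hrow s (X : form) : Bw := map (fun t => (true, q s t)) X.
Fixpoint hw (X : form) : Bw := if X is x :: X' then hrow x X' ++ hw X' else [::].

Lemma hrow_q s X : hrow s X ≡ qw s (dform X).
Proof.
elim: X => [|t X IH] /=; first by rewrite qw_a1.
rewrite -[_ :: _]/(qw s t ++ hrow s X) IH qwMr //.
Qed.
Lemma hw_cons x X : hw (x :: X) ≡ qw x (dform X) ++ hw X.
Proof. by rewrite /= hrow_q. Qed.
Lemma dform_cons x X : dform (x :: X) = x ⋅ dform X. Proof. by []. Qed.
Lemma dform_cat X Y : dform (X ++ Y) = dform X ⋅ dform Y.
Proof. by elim: X => /= [|x X ->]; [rewrite mul1g | rewrite mulgA]. Qed.
Lemma hw_cat X Y : hw (X ++ Y) ≡ hw X ++ hw Y ++ qw (dform X) (dform Y).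
Proof.
elim: X => [|x X IH]; first by rewrite /= qw_1a cats0.
rewrite cat_cons hw_cons IH hw_cons dform_cat dform_cons qwMr qwMl.
apply: Bperm; psolve.
Qed.

Lemma qw_eq a b c d : q a b = q c d -> qw a b = qw c d.
Proof. by rewrite /qw => ->. Qed.
Lemma qw_def a b : qw a b = [:: (true, q a b)]. Proof. by []. Qed.
#[local] Opaque qw.


Lemma isom_inv n : forall L R, isom n L R -> dform L = dform R /\ hw L ≡ hw R.
Proof.
elim/ltn_ind: n => -[|[|[|m]]] IH L R /=.
- by case=> -> ->.
- by case=> [a [b [-> [-> ->]]]].
- case=> [a1 [a2 [b1 [b2 [-> [-> [E1 E2]]]]]]] /=.
  by rewrite !mulg1 E1 E2.
- case=> [a1 [L' [b1 [R' [a [b [chi [-> [-> [Hc [[E1 E2] [H3 H4]]]]]]]]]]]].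
  have [d1 h1] := IH _ (ltnSn _) _ _ H3.
  have [d2 h2] := IH _ (ltnSn _) _ _ H4.
  rewrite !dform_cons d1 d2 !dform_cons mulgA E1 -mulgA; split => //.
  rewrite !hw_cons h1 h2 !hw_cons d1 d2 !dform_cons !qwMr.
  transitivity (qw a1 a ++ (qw a1 (dform chi) ++ qw a (dform chi)) ++ hw chi).
    by apply: Bperm; psolve.
  transitivity (qw b1 b ++ (qw b1 (dform chi) ++ qw b (dform chi)) ++ hw chi).
    by rewrite -!qwMl E1 (qw_eq E2).
  by apply: Bperm; psolve.
Qed.

Lemma iso_inv X Y : iso X Y -> size X = size Y /\ dform X = dform Y /\ hw X ≡ hw Y.
Proof. move=> H; have [_ E] := isom_size H; split => //; exact: isom_inv H. Qed.

Definition sgn n : G := if odd n then m1 else one.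
Definition good (X : form) : Prop := ~~ odd (size X) /\ dform X = sgn (size X)./2.
Definition pw (b : bool) (w : Bw) : Bw := if b then w else [::].
Lemma pwT w : pw true w = w. Proof. by []. Qed.
Lemma pwF w : pw false w = [::]. Proof. by []. Qed.
Definition corr n : Bw := pw (odd n./2./2) (qw m1 m1).
Definition fw (X : form) : Bw := hw X ++ corr (size X).

Lemma sgnD m n : sgn (m + n) = sgn m ⋅ sgn n.
Proof. by rewrite /sgn oddD; case: (odd m); case: (odd n) => /=; gnorm. Qed.

Lemma half_even a b : ~~ odd a -> (a + b)./2 = a./2 + b./2.
Proof. by move=> Ha; rewrite halfD (negbTE Ha). Qed.

Lemma qw_sgn m n : qw (sgn m) (sgn n) ≡ pw (odd m && odd n) (qw m1 m1).
Proof.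
rewrite /sgn; case: (odd m); case: (odd n); by rewrite ?qw_a1 ?qw_1a.
Qed.

Lemma corrD a b : ~~ odd a -> ~~ odd b ->
  corr (a + b) ≡ corr a ++ corr b ++ pw (odd a./2 && odd b./2) (qw m1 m1).
Proof.
move=> Ha Hb; rewrite /corr half_even // halfD oddD !oddD oddb.
case: (odd a./2); case: (odd b./2); case: (odd a./2./2); case: (odd b./2./2);
  cbv [addb andb negb]; rewrite ?pwT ?pwF ?cats0 ?cat0s;
  do 3? rewrite ?Bww ?cats0 ?cat0s; try reflexivity.
Qed.

Ltac bcan := cat_norm; lazymatch goal with
  | |- [::] ≡ [::] => reflexivity
  | |- ?A ++ ?R ≡ [::] => let R' := rm_bl A R in
       transitivity (A ++ A ++ R'); [apply: Bperm; psolve | rewrite catA Bww cat0s; bcan]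
  | |- ?A ≡ [::] => fail "bcan: single block" A
  end.
Ltac bsolve := apply: Bcancel; bcan.

Lemma good_cat X Y : good X -> good Y -> good (X ++ Y).
Proof.
move=> [HX dX] [HY dY]; split; first by rewrite size_cat oddD (negbTE HX) (negbTE HY).
by rewrite dform_cat dX dY size_cat half_even // sgnD.
Qed.
Lemma good_catl X Y : good (X ++ Y) -> good Y -> good X.
Proof.
move=> [H d] [HY dY]; rewrite size_cat oddD (negbTE HY) addbF in H; split => //.
move: d; rewrite dform_cat size_cat half_even // sgnD dY => /(f_equal (fun g => g ⋅ sgn (size Y)./2)).
by rewrite -!mulgA !mulgg !mulg1.
Qed.
Lemma fw_cat X Y : good X -> good Y -> fw (X ++ Y) ≡ fw X ++ fw Y.
Proof.
move=> [HX dX] [HY dY]; rewrite /fw hw_cat size_cat corrD // dX dY qw_sgn.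
transitivity (hw X ++ corr (size X) ++ hw Y ++ corr (size Y) ++
   (pw (odd (size X)./2 && odd (size Y)./2) (qw m1 m1) ++ pw (odd (size X)./2 && odd (size Y)./2) (qw m1 m1))).
  by apply: Bperm; psolve.
by rewrite Bww cats0 -!catA.
Qed.

Lemma good_hyps k : good (hyps k).
Proof.
elim: k => [|k IH]; first by split => //.
have Hh : good (@hyp S) by split => //=; rewrite mulg1 mul1g.
exact: (good_cat Hh IH).
Qed.
Lemma fw_hyps k : fw (hyps k) ≡ [::].
Proof.
elim: k => [|k IH] //.
have Hh : good (@hyp S) by split => //=; rewrite mulg1 mul1g.
rewrite -[hyps k.+1]/(hyp S ++ hyps k) fw_cat // ?IH ?cats0; last exact: good_hyps.
rewrite /fw /corr /=; exact: (qw_1a m1).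
Qed.

Lemma iso_good X Y : iso X Y -> good X -> good Y.
Proof. by move=> /iso_inv [E [d _]] [H1 H2]; rewrite /good -E -d. Qed.
Lemma iso_fw X Y : iso X Y -> fw X ≡ fw Y.
Proof. by move=> /iso_inv [E [_ h]]; rewrite /fw E h. Qed.
Lemma iso_symm X Y : iso X Y -> iso Y X.
Proof. move=> H; have [_ E] := isom_size H; rewrite /iso E; exact: isom_sym. Qed.

Lemma witt_good X Y : witt X Y -> good Y -> good X.
Proof.
move=> [k [l /iso_symm H]] HY.
apply: (good_catl (Y := hyps k)); last exact: good_hyps.
apply: (iso_good H); apply: good_cat => //; exact: good_hyps.
Qed.
Lemma witt_fw X Y : witt X Y -> good X -> good Y -> fw X ≡ fw Y.
Proof.
move=> [k [l H]] HX HY.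
have -> : fw X ≡ fw (X ++ hyps k) by rewrite fw_cat ?fw_hyps ?cats0 //; exact: good_hyps.
have -> : fw Y ≡ fw (Y ++ hyps l) by rewrite fw_cat ?fw_hyps ?cats0 //; exact: good_hyps.
exact: iso_fw.
Qed.

Local Notation scale := (@scale S).
Local Notation tensor := (@tensor S).
Definition ysg (b : bool) (y : G) : G := if b then y else one.

Lemma size_scale y X : size (scale y X) = size X.
Proof. exact: size_map. Qed.
Lemma dform_scale y X : dform (scale y X) = ysg (odd (size X)) y ⋅ dform X.
Proof.
elim: X => [|x X IH] /=; first by rewrite mulg1.
rewrite -/(scale y X) IH /ysg; case: (odd (size X)) => /=; gnorm.
Qed.
Lemma half_S n : odd n.+1./2 = odd n (+) odd n./2.
Proof. by rewrite -uphalfE uphalf_half oddD oddb. Qed.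

Lemma hw_scale y X : hw (scale y X) ≡
  hw X ++ pw (odd (size X)./2) (qw y y) ++ pw (~~ odd (size X)) (qw y (dform X)).
Proof.
elim: X => [|x X IH]; first by rewrite /= qw_a1.
rewrite -[scale y (x :: X)]/(y ⋅ x :: scale y X) !hw_cons IH dform_scale.
rewrite -[size (x :: X)]/((size X).+1) half_S oddS dform_cons /ysg.
case: (odd (size X)); case: (odd (size X)./2);
  cbv [addb negb]; rewrite ?pwT ?pwF ?cats0 ?cat0s ?mul1g ?qwMl ?qwMr ?qw_a1 ?qw_1a ?cats0 ?cat0s
  ?(qwC x y).
  all: apply: Bcancel; rewrite -?catA ?cat0s ?cats0.
  all: bsolve.
Qed.

Lemma good_scale y X : good X -> good (scale y X).
Proof.
move=> [H d]; rewrite /good size_scale; split => //.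
by rewrite dform_scale d /ysg (negbTE H) mul1g.
Qed.
Lemma fw_scale y X : good X -> fw (scale y X) ≡ fw X.
Proof.
move=> [H d]; rewrite /fw size_scale hw_scale H pwT d.
suff -> : pw (odd (size X)./2) (qw y y) ++ qw y (sgn (size X)./2) ≡ [::] by rewrite cats0.
rewrite /sgn; case: (odd (size X)./2); rewrite ?pwT ?pwF ?cat0s ?qw_a1 //.
by rewrite -qwMr mulgC qw_neg.
Qed.

Definition good4 (X : form) : Prop := 4 %| size X /\ dform X = one.
Lemma good4_good X : good4 X -> good X.
Proof.
move=> [H d]; have [k Hk] : exists k, size X = 4 * k by exists (size X %/ 4); rewrite mulnC divnK.
split; rewrite Hk; first by rewrite oddM.
by rewrite d /sgn (_ : 4 * k = (2 * k).*2) ?doubleK ?oddM // -mul2n mulnA.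
Qed.
Lemma good4_cat X Y : good4 X -> good4 Y -> good4 (X ++ Y).
Proof. by move=> [H1 d1] [H2 d2]; split; rewrite ?size_cat ?dvdn_add // dform_cat d1 d2 mulg1. Qed.
Lemma good4_scale y X : good4 X -> good4 (scale y X).
Proof.
move=> [H d]; rewrite /good4 size_scale dform_scale d /ysg; split => //.
have Ho : odd (size X) = false by move: H => /dvdnP [k ->]; rewrite oddM andbF.
by rewrite Ho mulg1.
Qed.
Lemma tensor_cons X b C : tensor X (b :: C) = scale b X ++ tensor X C.
Proof. by []. Qed.
Lemma tensor1 C : tensor [:: one] C = C.
Proof. by elim: C => [|b C IH] //; rewrite tensor_cons IH /Defs.scale /= mulg1. Qed.
Lemma size_tensor X C : size (tensor X C) = size X * size C.
Proof. by elim: C => [|b C IH]; rewrite ?muln0 // tensor_cons size_cat size_scale IH mulnS. Qed.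
Lemma good4_tensor X C : good4 X -> good4 (tensor X C).
Proof.
move=> HX; elim: C => [|b C IH]; first by split.
rewrite tensor_cons; apply: good4_cat => //; exact: good4_scale.
Qed.
Lemma fw_tensor X C : good4 X -> fw (tensor X C) ≡ pw (odd (size C)) (fw X).
Proof.
move=> HX; elim: C => [|b C IH] //=.
rewrite tensor_cons fw_cat; last (apply: good4_good; exact: good4_tensor);
  last (apply: good4_good; exact: good4_scale).
rewrite fw_scale ?IH; last exact: good4_good.
by case: (odd (size C)); rewrite ?pwT ?pwF ?Bww ?cats0.
Qed.
Lemma dform_tensor_even X C : ~~ odd (size X) -> dform (tensor X C) = ysg (odd (size C)) (dform X).
Proof.
move=> HX; elim: C => [|b C IH] //; rewrite tensor_cons dform_cat dform_scale (negbTE HX) IH /ysg mul1g.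
rewrite -[size (b :: C)]/((size C).+1) oddS; case: (odd (size C)) => /=; by rewrite ?mulgg ?mulg1.
Qed.
Lemma good4_tensor2 c1 c2 : ~~ odd (size c1) -> ~~ odd (size c2) -> good4 (tensor c1 c2).
Proof.
move=> H1 H2; split.
- rewrite size_tensor; move: H1 H2; rewrite -!dvdn2 => /dvdnP [a ->] /dvdnP [b ->].
  by rewrite mulnCA !mulnA -mulnA dvdn_mull.
- by rewrite dform_tensor_even // (negbTE H2).
Qed.

Local Notation Ipow := (@Ipow S).
Local Notation prodf := (@prodf S).
Lemma good_nil : good [::]. Proof. by []. Qed.

Lemma Ipow2_good phi : Ipow 2 phi -> good phi.
Proof.
elim=> [chis psi Hs Ha W | psi W | phi0 psi chi _ H1 _ H2 W | phi0 chi _ H1 W].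
- case: chis Hs Ha W => [|c1 [|c2 []]] // _ /= /andP [H1 /andP [H2 _]] W.
  apply: (witt_good W); rewrite /prodf /= tensor1.
  apply: good4_good; exact: good4_tensor2.
- exact: (witt_good W good_nil).
- exact: (witt_good W (good_cat H1 H2)).
- exact: (good_catl (witt_good W good_nil) H1).
Qed.

Lemma Ipow3_fw phi : Ipow 3 phi -> good phi /\ fw phi ≡ [::].
Proof.
elim=> [chis psi Hs Ha W | psi W | phi0 psi chi _ [H1 f1] _ [H2 f2] W | phi0 chi _ [H1 f1] W].
- case: chis Hs Ha W => [|c1 [|c2 [|c3 []]]] // _ /= /andP [Hc1 /andP [Hc2 /andP [Hc3 _]]] W.
  move: W; rewrite /prodf /= tensor1 => W.
  have G4 : good4 (tensor (tensor c1 c2) c3) by apply: good4_tensor; exact: good4_tensor2.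
  have Gp := witt_good W (good4_good G4).
  split => //; rewrite (witt_fw W Gp (good4_good G4)) fw_tensor ?(negbTE Hc3) //.
  exact: good4_tensor2.
- have Gp := witt_good W good_nil; split => //; rewrite (witt_fw W Gp good_nil) //.
- have Gc := witt_good W (good_cat H1 H2); split => //.
  by rewrite (witt_fw W Gc (good_cat H1 H2)) fw_cat // f1 f2.
- have Gcp := witt_good W good_nil; have Gc := good_catl Gcp H1; split => //.
  have := witt_fw W Gcp good_nil; rewrite fw_cat // f1 cats0 => ->; by [].
Qed.

Local Notation pfister := (@pfister S).
Ltac lnorm := lazymatch goal with
  | |- (_ :: _) = (_ :: _) => refine (f_equal2 cons _ _); [gnorm | lnorm]
  | |- [::] = [::] => reflexivity
  end.

Lemma pfisterE a b : pfister a b = [:: one; m1 ⋅ a; m1 ⋅ b; a ⋅ b].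
Proof. rewrite /Defs.pfister /Defs.tensor /Defs.scale /=; lnorm. Qed.

Lemma qw_aa a : qw a a ≡ qw a m1.
Proof. apply: Bcancel; rewrite -qwMr (mulgC a m1); exact: qw_neg. Qed.

Lemma fw_pfister a b : fw (pfister a b) ≡ qw a b.
Proof.
rewrite pfisterE /fw !hw_cons /corr [pw _ _]/= !dform_cons [dform [::]]/= [hw [::]]/= !mulg1.
rewrite !qwMl !qwMr ?qw_1a ?qw_a1 ?cat0s ?cats0.
rewrite (qw_aa a) (qw_aa b) (qwC m1 a) (qwC m1 b) (qwC b a).
bsolve.
Qed.

Lemma blk_pair x y z w : iso2 x y z w -> blk ([:: x; y], [:: z; w]).
Proof. by move=> H; right; exists x, y, z, w. Qed.
Lemma hyp_pair x : iso2 x (m1 ⋅ x) one m1.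
Proof. split; first by gnorm. by rewrite Q1 q1a. Qed.
Lemma hyp_pair' x : iso2 (m1 ⋅ x) x one m1.
Proof. apply: iso2_swl; exact: hyp_pair. Qed.
Lemma blk_single x : blk ([:: x], [:: x]).
Proof. by left; exists x. Qed.

Lemma good_pfister a b : good4 (pfister a b).
Proof. exact: good4_tensor2. Qed.
Lemma prodf2 c1 c2 : prodf [:: c1; c2] = tensor c1 c2.
Proof. by rewrite /prodf /= tensor1. Qed.
Lemma prodf3 c1 c2 c3 : prodf [:: c1; c2; c3] = tensor (tensor c1 c2) c3.
Proof. by rewrite /prodf /= tensor1. Qed.
Lemma Ipow2_pfister a b : Ipow 2 (pfister a b).
Proof. apply: (Ipow_prod (chis := [:: [:: one; m1 ⋅ a]; [:: one; m1 ⋅ b]])) => //. rewrite prodf2; exact: witt_refl. Qed.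

Lemma scale1 X : scale one X = X.
Proof. by elim: X => //= x X IH; rewrite mul1g -/(scale one X) IH. Qed.

Lemma I3_PP a b : I3 (pfister a b ++ pfister a b).
Proof.
apply: (Ipow_prod (chis := [:: [:: one; m1 ⋅ a]; [:: one; m1 ⋅ b]; [:: one; one]])) => //.
rewrite prodf3 -/(pfister a b) !tensor_cons scale1 -[tensor _ [::]]/([::] : form) cats0; exact: witt_refl.
Qed.

Lemma HY a y : q a y = zeroQ -> I3 (pfister a y).
Proof.
move=> H.
have H2 : q y (m1 ⋅ (a ⋅ y)) = zeroQ.
  have E : m1 ⋅ (a ⋅ y) = a ⋅ (m1 ⋅ y) by gnorm.
  rewrite E; apply/Q3; by rewrite Q2 H Q1.
pose W1 := [:: y; m1 ⋅ (a ⋅ y); m1 ⋅ y; a ⋅ y].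
have HW : I3 W1.
  apply: Ipow_zero; apply: (witt_blocks (k := 0) (l := 2)
    (bs := [:: ([:: y; m1 ⋅ y], [:: one; m1]); ([:: m1 ⋅ (a ⋅ y); a ⋅ y], [:: one; m1])])).
  - split; first exact/blk_pair/hyp_pair. split => //; exact/blk_pair/hyp_pair'.
  - rewrite /Fl /W1 /Defs.hyps /=; psolve.
  - rewrite /Fr /Defs.hyps /=; psolve.
apply: (I3_witt HW); rewrite pfisterE.
apply: (witt_blocks (k := 0) (l := 0)
  (bs := [:: ([:: one; m1 ⋅ a], [:: y; m1 ⋅ (a ⋅ y)]); ([:: m1 ⋅ y], [:: m1 ⋅ y]); ([:: a ⋅ y], [:: a ⋅ y])])).
- split; last by split; [exact: blk_single|split => //; exact: blk_single].
  apply: blk_pair; split; first by gnorm. by rewrite q1a H2.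
- rewrite /Fl /Defs.hyps /=; psolve.
- rewrite /Fr /Defs.hyps /=; psolve.
Qed.

Lemma R3 a b c : Rel (pfister a b ++ pfister a c) (pfister a (b ⋅ c)).
Proof.
have HP : I3 (prodf [:: [:: one; m1 ⋅ a]; [:: one; m1 ⋅ b]; [:: one; m1 ⋅ c]]).
  by apply: (Ipow_prod (chis := [:: [:: one; m1 ⋅ a]; [:: one; m1 ⋅ b]; [:: one; m1 ⋅ c]])) => //; exact: witt_refl.
have EP : prodf [:: [:: one; m1 ⋅ a]; [:: one; m1 ⋅ b]; [:: one; m1 ⋅ c]] =
  [:: one; m1 ⋅ a; m1 ⋅ b; a ⋅ b; m1 ⋅ c; a ⋅ c; b ⋅ c; m1 ⋅ (a ⋅ (b ⋅ c))].
  rewrite prodf3 /Defs.tensor /Defs.scale /=; lnorm.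
have EN : neg (pfister a (b ⋅ c)) = [:: m1; a; b ⋅ c; m1 ⋅ (a ⋅ (b ⋅ c))].
  rewrite pfisterE /neg /Defs.scale /=; lnorm.
rewrite EP in HP; rewrite /Rel -catA EN !pfisterE.
apply: (I3_witt HP).
apply: (witt_blocks (k := 0) (l := 2)
  (bs := singles [:: one; m1 ⋅ a; m1 ⋅ b; a ⋅ b; m1 ⋅ c; a ⋅ c; b ⋅ c; m1 ⋅ (a ⋅ (b ⋅ c))] ++
    [:: ([:: a; m1 ⋅ a], [:: one; m1]); ([:: m1; one], [:: one; m1])])).
- apply/allb_cat; split; first exact: allb_singles.
  split; first exact/blk_pair/hyp_pair. split => //; apply: blk_pair; exact/iso2_swl/iso2_refl.
- rewrite Fl_cat Fl_singles /Fl /Defs.hyps /=; psolve.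
- rewrite Fr_cat Fr_singles /Fr /Defs.hyps /=; psolve.
Qed.

Lemma Psym a b : Rel (pfister a b) (pfister b a).
Proof. apply: Rel_perm; rewrite !pfisterE (mulgC a b); psolve. Qed.

Lemma Psame a b c : q a b = q a c -> Rel (pfister a b) (pfister a c).
Proof.
move=> /Q3 H.
have H1 : I3 (pfister a b ++ pfister a c).
  apply/I3_Rel; apply: (Rel_trans (R3 a b c)); apply/I3_Rel; exact: HY.
have H2 := I3_neg (I3_PP a c).
have H3 := I3_add H1 H2.
apply: (I3_witt H3); rewrite neg_cat.
apply: (witt_cancel (A := pfister a b ++ neg (pfister a c)) (C := pfister a c)) => //.
psolve.
Qed.

Lemma Pind a b c d : q a b = q c d -> Rel (pfister a b) (pfister c d).
Proof.
move/Q4 => [x [E1 [E2 E3]]].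
apply: (Rel_trans (Psame E1)); apply: (Rel_trans (Psym a x)).
apply: (Rel_trans (Y := pfister x c)); first by apply: Psame; rewrite Q2 E2 Q2.
apply: (Rel_trans (Psym x c)); exact: Psame.
Qed.

Lemma ex_rep (x : Q) : exists p : G * G, q p.1 p.2 = x.
Proof. have [a [b E]] := q_surj x; by exists (a, b). Qed.
Definition rep (x : Q) : G * G := proj1_sig (constructive_indefinite_description _ (ex_rep x)).
Lemma rep_spec x : q (rep x).1 (rep x).2 = x.
Proof. exact: (proj2_sig (constructive_indefinite_description _ (ex_rep x))). Qed.
Definition gl (c : bool * Q) : form := pfister (rep c.2).1 (rep c.2).2.
Definition g (w : Bw) : form := flatten (map gl w).
Lemma g_cons c w : g (c :: w) = gl c ++ g w. Proof. by []. Qed.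
Lemma g_cat u v : g (u ++ v) = g u ++ g v.
Proof. by rewrite /g map_cat flatten_cat. Qed.

Lemma gl_rel a b : Rel (gl (true, q a b)) (pfister a b).
Proof. apply: Pind; exact: rep_spec. Qed.

Lemma fw_g w : good (g w) /\ fw (g w) ≡ w.
Proof.
elim: w => [|c w [Gw Fw]]; first by split.
have Gc : good (gl c) by apply: good4_good; exact: good_pfister.
rewrite g_cons; split; first exact: good_cat.
rewrite fw_cat // Fw fw_pfister qw_def rep_spec.
case: c Gc => -[] x _ //; by rewrite -[(false, x) :: w]/([:: (false, x)] ++ w) Bft.
Qed.

Lemma Ipow2_g w : Ipow 2 (g w).
Proof.
elim: w => [|c w IH]; first by apply: Ipow_zero; exact: witt_refl.
rewrite g_cons; apply: (Ipow_add (Ipow2_pfister _ _) IH); exact: witt_refl.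
Qed.

Lemma Rel_PP X : Rel (X ++ X) [::] -> True. Proof. by []. Qed.

Lemma g_resp u v : u ≡ v -> Rel (g u) (g v).
Proof.
elim=> {u v}.
- move=> u; exact: Rel_refl.
- move=> u v _; exact: Rel_sym.
- move=> u v w _ H1 _ H2; exact: Rel_trans H1 H2.
- move=> u u' v v' _ H1 _ H2; rewrite !g_cat; exact: Rel_cat.
- move=> x; rewrite !g_cons [g [::]]/= cats0; apply/I3_Rel; exact: I3_PP.
- move=> x; rewrite !g_cons [g [::]]/= cats0; apply/I3_Rel; exact: I3_PP.
- move=> c d; apply: Rel_perm; rewrite !g_cons [g [::]]/= !cats0; psolve.
- move=> a b c; rewrite !g_cons [g [::]]/= !cats0.
  apply: (Rel_trans (Y := pfister a b ++ pfister a c)); first by apply: Rel_cat; exact: gl_rel.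
  apply: (Rel_trans (R3 a b c)); apply: Rel_sym; exact: gl_rel.
Qed.

Lemma Rel_fw X Y : good X -> good Y -> Rel X Y -> fw X ≡ fw Y.
Proof.
move=> GX GY /Ipow3_fw [_ H]; rewrite fw_cat // ?fw_scale // in H; last exact: good_scale.
exact: Bcancel.
Qed.

Lemma sgnS k : sgn k.+1 = m1 ⋅ sgn k.
Proof. by rewrite /sgn /=; case: (odd k) => /=; gnorm. Qed.

Lemma decomp n : forall Z, size Z = n -> good Z -> exists w, Rel Z (g w).
Proof.
elim/ltn_ind: n => n IH Z.
case: Z => [|x [|y [|z [|t Z3]]]].
- by move=> _ _; exists [::]; exact: Rel_refl.
- by move=> _ [].
- move=> _ [_ d]; exists [::]; apply/I3_Rel; apply: Ipow_zero.
  have Ey : y = m1 ⋅ x.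
    have d' : x ⋅ (y ⋅ one) = m1 := d.
    transitivity (x ⋅ (x ⋅ (y ⋅ one))); first by gnorm.
    rewrite d'; gnorm.
  apply: (witt_blocks (k := 0) (l := 1) (bs := [:: ([:: x; y], [:: one; m1])])).
  + split => //; apply: blk_pair; rewrite Ey; exact: hyp_pair.
  + rewrite /Fl /Defs.hyps /=; psolve.
  + rewrite /Fr /Defs.hyps /=; psolve.
- by move=> _ [].
- move=> Hs [Hev d].
  set W := x ⋅ y ⋅ (z ⋅ t).
  set N := one :: m1 ⋅ W :: Z3.
  have GN : good N.
    move: Hev d; rewrite /good /N /= !sgnS => Hev d; split; first by move: Hev; rewrite !negbK.
    have E : sgn (size Z3)./2 = x ⋅ (y ⋅ (z ⋅ (t ⋅ dform Z3))) by rewrite d; gnorm.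
    rewrite E /W; gnorm.
  have [w Hw] := IH (size N) (ltac:(by rewrite -Hs /N /=)) N erefl GN.
  set Pxy := pfister x y; set Pzt := pfister z t.
  set P' := pfister (m1 ⋅ (x ⋅ y)) (m1 ⋅ (z ⋅ t)).
  have Step1 : Rel ([:: x, y, z, t & Z3] ++ Pxy ++ Pzt) (N ++ P').
    have EP : P' = [:: one; x ⋅ y; z ⋅ t; W] by rewrite /P' pfisterE /W; lnorm.
    rewrite EP /Pxy /Pzt !pfisterE /N.
    apply: (Rel_blocks (k := 1) (l := 4)
      (bs := singles (Z3 ++ [:: one; one; x ⋅ y; z ⋅ t]) ++
        [:: ([:: x; m1 ⋅ x], [:: one; m1]); ([:: y; m1 ⋅ y], [:: one; m1]);
            ([:: z; m1 ⋅ z], [:: one; m1]); ([:: t; m1 ⋅ t], [:: one; m1]);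
            ([:: one; m1], [:: m1 ⋅ W; W])])).
    + apply/allb_cat; split; first exact: allb_singles.
      do 4 (split; first exact/blk_pair/hyp_pair).
      split => //; apply/blk_pair/iso2_sym; exact: hyp_pair'.
    + rewrite Fl_cat Fl_singles /Fl /Defs.hyps /=; psolve.
    + rewrite Fr_cat Fr_singles /Fr /Defs.hyps /=; psolve.
  have HQQ : Rel [::] ((Pxy ++ Pzt) ++ (Pxy ++ Pzt)).
    rewrite /Rel cat0s; apply: I3_neg; apply: (I3_perm (I3_add (I3_PP x y) (I3_PP z t))).
    rewrite /Pxy /Pzt; psolve.
  exists (w ++ [:: (true, q (m1 ⋅ (x ⋅ y)) (m1 ⋅ (z ⋅ t))); (true, q x y); (true, q z t)]).
  rewrite g_cat !g_cons [g [::]]/= cats0.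
  apply: (Rel_trans (Y := ([:: x, y, z, t & Z3] ++ (Pxy ++ Pzt)) ++ (Pxy ++ Pzt))).
    rewrite -(catA [:: x, y, z, t & Z3] (Pxy ++ Pzt) (Pxy ++ Pzt)).
    by have := Rel_cat (Rel_refl [:: x, y, z, t & Z3]) HQQ; rewrite cats0.
  apply: (Rel_trans (Y := (N ++ P') ++ (Pxy ++ Pzt))).
    exact: (Rel_cat Step1 (Rel_refl (Pxy ++ Pzt))).
  rewrite -(catA N P' (Pxy ++ Pzt)); apply: (Rel_cat Hw).
  apply: Rel_cat; first by apply: Rel_sym; exact: gl_rel.
  apply: Rel_cat; apply: Rel_sym; exact: gl_rel.
Qed.

Lemma coset_of_Rel phi psi : Rel phi psi -> cosetI3_eq phi psi.
Proof.
move=> H; exists (phi ++ neg psi); split => //.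
apply: (witt_cancel (A := phi) (C := psi)) => //; psolve.
Qed.

End Main.

Theorem corollary4 (S : qstruct) :
  exists f : form S -> Bword S,
    (forall phi psi, Ipow 2 phi -> Ipow 2 psi ->
       (cosetI3_eq phi psi <-> Beq (f phi) (f psi))) /\
    (forall phi psi, Ipow 2 phi -> Ipow 2 psi ->
       Beq (f (phi ++ psi)) (f phi ++ f psi)) /\
    (forall w : Bword S, exists phi, Ipow 2 phi /\ Beq (f phi) w) /\
    (forall a b, Beq (f (pfister a b)) [:: (true, @q S a b)]).
Proof.
exists (@fw S); split; last split; last split.
- move=> phi psi H1 H2; have G1 := Ipow2_good H1; have G2 := Ipow2_good H2; split.
  + move=> [chi [Hc W]]; have [Gc Fc] := Ipow3_fw Hc.
    apply: Beq_trans (witt_fw W G1 (good_cat G2 Gc)) _.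
    apply: Beq_trans (fw_cat G2 Gc) _.
    by have := Beq_cat (Beq_refl (fw psi)) Fc; rewrite cats0.
  + move=> E.
    have [w1 R1] := decomp erefl G1; have [w2 R2] := decomp erefl G2.
    have [Gw1 Fw1] := fw_g w1; have [Gw2 Fw2] := fw_g w2.
    have E1 := Rel_fw G1 Gw1 R1; have E2 := Rel_fw G2 Gw2 R2.
    have Ew : Beq w1 w2.
      apply: Beq_trans (Beq_sym Fw1) _; apply: Beq_trans (Beq_sym E1) _.
      apply: Beq_trans E _; exact: Beq_trans E2 Fw2.
    apply: coset_of_Rel; apply: (Rel_trans R1); apply: (Rel_trans (g_resp Ew)).
    exact: Rel_sym.
- move=> phi psi H1 H2; apply: fw_cat; exact: Ipow2_good.
- move=> w; exists (g w); split; first exact: Ipow2_g.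
  by case: (fw_g w).
- move=> a b; rewrite -qw_def; exact: fw_pfister.
Qed.
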